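(* Let $\mathcal F$ be a homogeneous foliation of degree $d$ on $\mathbb P^2$, i.e. defined in some affine coordinates $(x,y)$ by a vector field whose coefficients are homogeneous polynomials of degree $d$, and let $O=(0,0)$. If the curvature $K(\mathrm{Leg}\,\mathcal F)$ is holomorphic on $\check{\mathbb P}^2\setminus\check O$, then $K(\mathrm{Leg}\,\mathcal F)\equiv 0$.
   Context: $\check O\subset\check{\mathbb P}^2$ denotes the dual line of $O$, consisting of the lines through $O$. With affine coordinates $(p,q)$ on $\check{\mathbb P}^2$ corresponding to the line $\{y=px+q\}$, the Legendre transform $\mathrm{Leg}\,\mathcal F$ of the foliation given by $A\partial_x+B\partial_y$ is the $d$-web on $\check{\mathbb P}^2$ defined by the implicit differential equation $B(x,px+q)-pA(x,px+q)=0$ with $x=-\frac{dq}{dp}$. The curvature $K(\mathcal W)$ of a web $\mathcal W$: for a $3$-web given locally off its discriminant by $1$-forms $\omega_1,\omega_2,\omega_3$ normalized so that $\omega_1+\omega_2+\omega_3=0$, there is a unique $1$-form $\eta$ with $d\omega_i=\eta\wedge\omega_i$, and $K=d\eta$; for a $k$-web with $k>3$ it is the sum of the curvatures of all its $3$-subwebs. It is a meromorphic $2$-form with poles in the discriminant. *)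

(* Defs.v *)
(* C = R[i] (complex numbers over a realType R, i.e. the
   field of complex numbers); bivariate polynomials are multinomials
   {mpoly C[2]} with 'X_0 = x and 'X_1 = y. *)
From HB Require Import structures.
From mathcomp Require Import all_boot all_order all_algebra.
From mathcomp Require Import reals.
From mathcomp.real_closed Require Import complex.
From mathcomp Require Import mpoly.

Set Implicit Arguments.
Unset Strict Implicit.
Unset Printing Implicit Defensive.

Import Order.TTheory GRing.Theory Num.Theory.
Local Open Scope ring_scope.

(* The foliation: vector field A d/dx + B d/dy.                              *)

(* A and B have no common non-constant factor (the vector field has        *)
(* isolated zeros, i.e. it is saturated and really defines the foliation). *)
Definition mpoly_coprime (C : fieldType) (A B : {mpoly C[2]}) : Prop :=
  forall h : {mpoly C[2]},
    (exists u, A = h * u) -> (exists v, B = h * v) -> (msize h <= 1)%N.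

(* Homogeneous foliation of degree d on P^2: A, B homogeneous of degree d,  *)
(* coprime, and x B - y A <> 0 (so that the foliation has degree exactly d; *)
(* otherwise it would be the radial foliation).                             *)
Definition homogeneous_foliation (C : fieldType) (d : nat)
    (A B : {mpoly C[2]}) : Prop :=
  [/\ A \is d.-homog, B \is d.-homog, mpoly_coprime A B
    & 'X_0 * B - 'X_1 * A != 0].

(* Differential-algebraic model of (germs of meromorphic functions on) the  *)
(* affine chart (p,q) of the dual plane, where (p,q) <-> line {y = px + q}.  *)

Section DiffModel.
Variables (C L : fieldType).

Definition is_derivation (D : L -> L) : Prop :=
  (forall u v, D (u + v) = D u + D v) /\
  (forall u v, D (u * v) = D u * v + u * D v).

Definition dual_chart_model (iota : {rmorphism C -> L}) (Dp Dq : L -> L)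
    (P Q : L) : Prop :=
  [/\ is_derivation Dp, is_derivation Dq,
      (forall u, Dp (Dq u) = Dq (Dp u)),
      (forall c, Dp (iota c) = 0 /\ Dq (iota c) = 0)
    & [/\ Dp P = 1, Dq P = 0, Dp Q = 0 & Dq Q = 1]].

(* F(p,q,X) = B(X, pX + q) - p A(X, pX + q), as a polynomial in X over L.   *)
Definition legendre_poly (iota : {rmorphism C -> L}) (A B : {mpoly C[2]})
    (P Q : L) : {poly L} :=
  let ev := mmap (fun c => (iota c)%:P)
                 (fun i : 'I_2 => if i == 0 then 'X else P *: 'X + Q%:P) in
  ev B - P *: ev A.

(* x_0, ..., x_(d-1) are the (pairwise distinct) slopes x = -dq/dp of the   *)
(* d foliations of the d-web Leg F, i.e. the roots in X of F(p,q,X) = 0.    *)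
Definition legendre_slopes (iota : {rmorphism C -> L}) (A B : {mpoly C[2]})
    (P Q : L) (d : nat) (x : 'I_d -> L) : Prop :=
  let F := legendre_poly iota A B P Q in
  [/\ size F = d.+1, injective x
    & F = lead_coef F *: \prod_(i < d) ('X - (x i)%:P)].

(* 1-forms  f dp + g dq  are represented by pairs (f, g); 2-forms           *)
(* k dp/\dq by their coefficient k.                                          *)
Definition dform1 (Dp Dq : L -> L) (w : L * L) : L := Dp w.2 - Dq w.1.
Definition wedge1 (e w : L * L) : L := e.1 * w.2 - e.2 * w.1.

(* the 1-form  lam (x dp + dq), defining the foliation of slope x           *)
Definition slope_form (lam x : L) : L * L := (lam * x, lam).

(* K is the curvature of the 3-web with slopes x1, x2, x3: there are        *)
(* defining 1-forms w_i normalized by w_1 + w_2 + w_3 = 0, and a 1-form eta  *)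
(* with d w_i = eta /\ w_i, and K = d eta.                                   *)
Definition is_curvature3 (Dp Dq : L -> L) (x1 x2 x3 K : L) : Prop :=
  exists (l1 l2 l3 : L) (eta : L * L),
    [/\ [/\ l1 != 0, l2 != 0 & l3 != 0],
        l1 * x1 + l2 * x2 + l3 * x3 = 0 /\ l1 + l2 + l3 = 0,
        [/\ dform1 Dp Dq (slope_form l1 x1) = wedge1 eta (slope_form l1 x1),
            dform1 Dp Dq (slope_form l2 x2) = wedge1 eta (slope_form l2 x2)
          & dform1 Dp Dq (slope_form l3 x3) = wedge1 eta (slope_form l3 x3)]
      & K = dform1 Dp Dq eta].

Definition is_web_curvature (Dp Dq : L -> L) (d : nat) (x : 'I_d -> L)
    (K : L) : Prop :=
  exists Kf : 'I_d -> 'I_d -> 'I_d -> L,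
    (forall i j k : 'I_d, (i < j < k)%N ->
        is_curvature3 Dp Dq (x i) (x j) (x k) (Kf i j k)) /\
    K = \sum_(i < d) \sum_(j < d) \sum_(k < d | (i < j < k)%N) Kf i j k.

(* The complement of the dual line of O in the dual plane is the affine     *)
(* chart (a,b) <-> line {a x + b y + 1 = 0}; there a = p/q, b = -1/q and     *)
(* da/\db = q^-3 dp/\dq.  The 2-form K dp/\dq = (K q^3) da/\db is            *)
(* holomorphic there iff its coefficient k = K q^3, a rational function of   *)
(* (a,b), is regular at every point (a0,b0) of C^2.                          *)
Definition holomorphic_off_dualO (iota : {rmorphism C -> L}) (P Q K : L)
    : Prop :=
  let ev := mmap iota (fun i : 'I_2 => if i == 0 then P / Q else - Q^-1) in
  forall a0 b0 : C, exists f g : {mpoly C[2]},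
    g.@[fun i : 'I_2 => if i == 0 then a0 else b0] != 0 /\
    K * Q ^+ 3 * ev g = ev f.

End DiffModel.

(* Main.v *)
Require Import Defs.
From HB Require Import structures.
From mathcomp Require Import all_boot all_order all_algebra.
From mathcomp Require Import reals.
From mathcomp.real_closed Require Import complex.
From mathcomp Require Import mpoly.
From mathcomp Require Import ring zify.
Import GRing.Theory Num.Theory.
Local Open Scope ring_scope.

Section Der.
Variables (S : comRingType) (D : S -> S).
Hypothesis Dadd : forall u v, D (u + v) = D u + D v.
Hypothesis Dmul : forall u v, D (u * v) = D u * v + u * D v.

Lemma D0 : D 0 = 0.
Proof. apply: (@addrI _ (D 0)); by rewrite -Dadd !addr0. Qed.

Lemma D1 : D 1 = 0.
Proof. move: (Dmul 1 1); rewrite mul1r mulr1 mul1r => h.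
apply: (@addrI _ (D 1)); by rewrite -h addr0. Qed.

Lemma DN u : D (- u) = - D u.
Proof. apply/eqP; rewrite -subr_eq0 opprK -Dadd addNr D0 //. Qed.

Lemma DB u v : D (u - v) = D u - D v.
Proof. by rewrite Dadd DN. Qed.

Lemma Dnat k : D k%:R = 0.
Proof. elim: k => [|k IH]; first exact: D0.
by rewrite -addn1 natrD Dadd IH D1 addr0. Qed.

Lemma Dsum (I : Type) (r : seq I) (Pr : pred I) (F : I -> S) :
  D (\sum_(i <- r | Pr i) F i) = \sum_(i <- r | Pr i) D (F i).
Proof. exact: (big_morph D Dadd D0). Qed.

Lemma DcM c u : D c = 0 -> D (c * u) = c * D u.
Proof. by move=> h; rewrite Dmul h mul0r add0r. Qed.

Lemma Dexp u t k : D u = t * u -> D (u ^+ k) = (k%:R * t) * u ^+ k.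
Proof.
move=> h; elim: k => [|k IH]; first by rewrite expr0 D1 mul0r mul0r.
rewrite exprS Dmul IH h mulrS; ring.
Qed.

Lemma Dprod (I : Type) (r : seq I) (Pr : pred I) (u t : I -> S) :
  (forall i, D (u i) = t i * u i) ->
  D (\prod_(i <- r | Pr i) u i) = (\sum_(i <- r | Pr i) t i) * \prod_(i <- r | Pr i) u i.
Proof.
move=> h; apply: (big_rec2 (fun x y => D y = x * y)).
  by rewrite D1 mul0r.
move=> i y1 y2 _ IH; rewrite Dmul IH h; ring.
Qed.

Lemma D_mmap n (Cr : ringType) (f : Cr -> S) (g : 'I_n -> S) (s : S) :
  (forall c, D (f c) = 0) -> (forall i, D (g i) = s * g i) ->
  forall p : {mpoly Cr[n]}, D (mmap f g p) =
    \sum_(m <- msupp p) (s * (mdeg m)%:R) * (f p@_m * mmap1 g m).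
Proof.
move=> hf hg p; rewrite /mmap Dsum; apply: eq_bigr => m _.
rewrite DcM // /mmap1 (@Dprod _ _ _ _ (fun i => (m i)%:R * s)).
  by rewrite mdegE natr_sum -big_distrl /=; ring.
by move=> i; rewrite (Dexp _ _ (m i) (hg i)) mulrC.
Qed.

End Der.
Arguments D0 {S D}. Arguments D1 {S D}. Arguments DN {S D}. Arguments DB {S D}.
Arguments Dnat {S D}. Arguments Dsum {S D}. Arguments DcM {S D}. Arguments Dexp {S D}.
Arguments Dprod {S D}. Arguments D_mmap {S D}.


Section PolyDer.
Variables (L : fieldType) (E : L -> L).
Hypothesis Eadd : forall u v, E (u + v) = E u + E v.
Hypothesis Emul : forall u v, E (u * v) = E u * v + u * E v.

Definition DP (G : {poly L}) : {poly L} := map_poly E G + 'X * G^`().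

Lemma E0' : E 0 = 0. Proof. exact: (D0 Eadd). Qed.

Lemma mapE_add G H : map_poly E (G + H) = map_poly E G + map_poly E H.
Proof. by apply/polyP => i; rewrite coefD !coef_map_id0 ?E0' // coefD Eadd. Qed.

Lemma mapE_mul G H : map_poly E (G * H) = map_poly E G * H + G * map_poly E H.
Proof.
apply/polyP => i; rewrite coefD !coefM coef_map_id0 ?E0' // coefM.
rewrite (Dsum Eadd) -big_split /=; apply: eq_bigr => j _.
by rewrite Emul !coef_map_id0 ?E0'.
Qed.

Lemma DPadd G H : DP (G + H) = DP G + DP H.
Proof. rewrite /DP mapE_add derivD; ring. Qed.

Lemma DPmul G H : DP (G * H) = DP G * H + G * DP H.
Proof. rewrite /DP mapE_mul derivM; ring. Qed.

Lemma DPC c : DP c%:P = (E c)%:P.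
Proof.
rewrite /DP derivC mulr0 addr0; apply/polyP => i.
by rewrite coef_map_id0 ?E0' // !coefC; case: (i == 0)%N => //; rewrite E0'.
Qed.

Lemma DPX : DP 'X = 'X.
Proof.
rewrite /DP derivX mulr1.
have -> : map_poly E 'X = 0.
  apply/polyP => i; rewrite coef_map_id0 ?E0' // coefX coef0.
  by case: (i == 1)%N; [rewrite (D1 Emul) | rewrite E0'].
by rewrite add0r.
Qed.

End PolyDer.
Arguments DPadd {L E}. Arguments DPmul {L E}. Arguments DPC {L E}. Arguments DPX {L E}.


Lemma slopes_scale (Cf L : fieldType) (E : L -> L) (iota : {rmorphism Cf -> L})
  (d : nat) (A B : {mpoly Cf[2]}) (P Q : L) (x : 'I_d -> L) :
  (forall u v, E (u + v) = E u + E v) ->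
  (forall u v, E (u * v) = E u * v + u * E v) ->
  (forall c, E (iota c) = 0) -> E P = 0 -> E Q = Q ->
  A \is d.-homog -> B \is d.-homog ->
  legendre_slopes iota A B P Q x -> forall i, E (x i) = x i.
Proof.
move=> Eadd Emul Ec EP EQ hA hB [hsz hinj hF] i.
pose DPa := DPadd Eadd; pose DPm := DPmul Eadd Emul.
set F := legendre_poly iota A B P Q in hsz hF.
have hev : forall h : {mpoly Cf[2]}, h \is d.-homog ->
   DP _ E (mmap (fun c => (iota c)%:P)
      (fun i : 'I_2 => if i == 0 then 'X else P *: 'X + Q%:P) h) =
   d%:R * (mmap (fun c => (iota c)%:P)
      (fun i : 'I_2 => if i == 0 then 'X else P *: 'X + Q%:P) h).
  move=> h hh; rewrite (D_mmap DPa DPm _ _ _ _ 1).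
  - rewrite /mmap big_distrr /=; apply: eq_big_seq => m hm.
    by rewrite (dhomog_mf hh hm) mul1r.
  - by move=> c; rewrite (DPC Eadd) Ec.
  - move=> j; case: (j == 0); first by rewrite (DPX Eadd Emul) mul1r.
    rewrite -mul_polyC DPa DPm (DPC Eadd) (DPX Eadd Emul) (DPC Eadd) EP EQ; ring.
have hDF : DP _ E F = d%:R * F.
  rewrite /F /legendre_poly /= (DB DPa) hev //.
  rewrite -[P *: mmap _ _ A]mul_polyC DPm (DPC Eadd) EP hev //; ring.
have hlc : lead_coef F != 0.
  by rewrite lead_coef_eq0 -size_poly_eq0 hsz.
set G := \prod_(j < d | j != i) ('X - (x j)%:P).
have hprod : \prod_(j < d) ('X - (x j)%:P) = ('X - (x i)%:P) * G.
  by rewrite (bigD1 i).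
have hG : G.[x i] != 0.
  rewrite horner_prod; apply/prodf_neq0 => j hj.
  rewrite hornerXsubC subr_eq0; apply/eqP => h; move/eqP: hj; apply.
  by apply: hinj.
have hFx : F.[x i] = 0.
  by rewrite hF hprod hornerZ hornerM hornerXsubC subrr mul0r mulr0.
have := congr1 (fun p => p.[x i]) hDF => /=.
rewrite hornerM hFx mulr0 hF -mul_polyC hprod DPm DPm (DB DPa) (DPX Eadd Emul) !(DPC Eadd).
rewrite !(hornerD, hornerM, hornerN, hornerX, hornerC, hornerXsubC) subrr.
rewrite !(mul0r, mulr0, add0r, addr0) => /eqP.
rewrite mulf_eq0 (negbTE hlc) /= mulf_eq0 (negbTE hG) orbF subr_eq0.
by move/eqP.
Qed.


Section Curv.
Variables (L : fieldType) (Dp Dq : L -> L) (Q : L).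
Hypothesis Dpa : forall u v, Dp (u + v) = Dp u + Dp v.
Hypothesis Dpm : forall u v, Dp (u * v) = Dp u * v + u * Dp v.
Hypothesis Dqa : forall u v, Dq (u + v) = Dq u + Dq v.
Hypothesis Dqm : forall u v, Dq (u * v) = Dq u * v + u * Dq v.
Hypothesis comm : forall u, Dp (Dq u) = Dq (Dp u).
Hypothesis DpQ : Dp Q = 0.
Hypothesis DqQ : Dq Q = 1.

Let E u := Q * Dq u.
Let Ea u v : E (u + v) = E u + E v. Proof. by rewrite /E Dqa mulrDr. Qed.
Let Em u v : E (u * v) = E u * v + u * E v. Proof. by rewrite /E Dqm; ring. Qed.
Let EDp u : E (Dp u) = Dp (E u).
Proof. by rewrite /E Dpm DpQ mul0r add0r comm. Qed.
Let EDq u : E (Dq u) = Dq (E u) - Dq u.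
Proof. by rewrite /E Dqm DqQ mul1r; ring. Qed.

Lemma step (l x mu e1 e2 : L) : l != 0 -> E l = mu * l -> E x = x ->
  Dp l - Dq (l * x) = e1 * l - e2 * (l * x) ->
  (Dp mu - E e1) - x * (Dq mu - E e2 - e2) = 0.
Proof.
move=> l0 hl hx e.
have h := congr1 E e.
rewrite /= (DB Ea) EDp EDq (DB Ea) !Em hl hx in h.
rewrite /E in h; rewrite !(Dpm, Dqm, DB Dqa, DB Dpa, Dqa, Dpa) in h.
rewrite !(Dpm, Dqm, DB Dqa, DB Dpa, Dqa, Dpa) in e.
rewrite -/(E e1) -/(E e2) in h.
apply: (mulfI l0); rewrite mulr0.
match type of h with ?a = ?b => match type of e with ?c = ?dd =>
  transitivity ((a - b) - mu * (c - dd)); [rewrite /E; ring |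
    by rewrite h e !subrr mulr0 subrr] end end.
Qed.

Lemma curv3_scale x1 x2 x3 K :
  x1 != x2 -> x2 != x3 -> E x1 = x1 -> E x2 = x2 -> E x3 = x3 ->
  is_curvature3 Dp Dq x1 x2 x3 K -> E K = - K.
Proof.
move=> n12 n23 h1 h2 h3 [l1 [l2 [l3 [eta [[n1 n2 n3] [s1 s2] [e1 e2 e3] hK]]]]].
have E0 : E 0 = 0 by exact: D0 Ea.
have t1 : E l1 * x1 + E l2 * x2 + E l3 * x3 = 0.
  have := congr1 E s1; rewrite !Ea !Em h1 h2 h3 E0 => h.
  match type of h with ?a = _ =>
    transitivity (a - (l1 * x1 + l2 * x2 + l3 * x3)); [ring | by rewrite h s1 subrr] end.
have t2 : E l1 + E l2 + E l3 = 0 by have := congr1 E s2; rewrite !Ea E0.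
set mu := E l1 / l1.
have hl1 : E l1 = mu * l1 by rewrite /mu divfK.
have hl2 : E l2 = mu * l2.
  have a : (E l2 - mu * l2) * (x2 - x3) = 0.
    transitivity ((E l1 * x1 + E l2 * x2 + E l3 * x3) - mu * (l1 * x1 + l2 * x2 + l3 * x3)
      - x3 * ((E l1 + E l2 + E l3) - mu * (l1 + l2 + l3)) + (x3 - x1) * (E l1 - mu * l1)).
      ring.
    rewrite t1 s1 t2 s2 hl1; ring.
  by move/eqP: a; rewrite mulf_eq0 (subr_eq0 x2) (negbTE n23) orbF subr_eq0 => /eqP.
have k1 := step _ _ _ _ _ n1 hl1 h1 e1.
have k2 := step _ _ _ _ _ n2 hl2 h2 e2.
have c2 : Dq mu - E eta.2 - eta.2 = 0.
  apply/eqP; have : (x2 - x1) * (Dq mu - E eta.2 - eta.2) = 0.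
    by rewrite -[RHS](subrr 0) -{1}k1 -k2; ring.
  by move/eqP; rewrite mulf_eq0 subr_eq0 eq_sym (negbTE n12).
have c1 : Dp mu = E eta.1.
  by apply/eqP; rewrite -subr_eq0; move: k1; rewrite c2 mulr0 subr0 => ->.
rewrite hK /dform1 (DB Ea) EDp EDq.
have -> : E eta.2 = Dq mu - eta.2 by rewrite -[LHS]addr0 -c2; ring.
rewrite -c1 (DB Dpa) comm; ring.
Qed.

End Curv.


Section Eig.
Variables (L : fieldType) (E : L -> L).
Hypothesis Ea : forall u v, E (u + v) = E u + E v.
Hypothesis Em : forall u v, E (u * v) = E u * v + u * E v.

Lemma eig n (v lam : nat -> L) : (forall k, E (lam k) = 0) ->
  (forall k, E (v k) = lam k * v k) ->
  (forall j k, (j < n)%N -> (k < n)%N -> lam j = lam k -> j = k) ->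
  \sum_(k < n) v k = 0 -> forall k, (k < n)%N -> v k = 0.
Proof.
elim: n v => [|n IH] v hl hv hd hs k hk; first by [].
rewrite big_ord_recr /= in hs.
have hE := congr1 E hs; rewrite Ea (Dsum Ea) (D0 Ea) hv (eq_bigr _ (fun (i : 'I_n) _ => hv i)) in hE.
have hw : \sum_(k < n) ((lam k - lam n) * v k) = 0.
  under eq_bigr do rewrite mulrBl.
  rewrite sumrB.
  have e1 : \sum_(i < n) lam i * v i = - (lam n * v n).
    by apply/eqP; rewrite -subr_eq0 opprK hE.
  have e2 : \sum_(i < n) lam n * v i = - (lam n * v n).
    rewrite -big_distrr /=; have -> : \sum_(i < n) v i = - v n.
      by apply/eqP; rewrite -subr_eq0 opprK hs.
    by rewrite mulrN.
  by rewrite e1 e2 subrr.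
have hw0 : forall k, (k < n)%N -> (lam k - lam n) * v k = 0.
  apply: (IH (fun k => (lam k - lam n) * v k)) => //.
    move=> j; rewrite Em hv (DB Ea) !hl subrr mul0r add0r; ring.
  by move=> j k' hj hk'; apply: hd; apply: ltnW.
have hvk : forall k, (k < n)%N -> v k = 0.
  move=> j hj; have := hw0 j hj => /eqP; rewrite mulf_eq0 subr_eq0 => /orP[|/eqP//].
  move=> /eqP /(hd _ _ (ltnW hj) (leqnn _)) hjn; by rewrite hjn ltnn in hj.
have hvn : v n = 0.
  by move: hs; rewrite big1 ?add0r // => i _; apply: hvk; apply: ltn_ord.
move: hk; rewrite ltnS leq_eqVlt => /orP[/eqP -> //|]; exact: hvk.
Qed.
End Eig.

Lemma regroup (L : fieldType) (T : eqType) (s : seq T) (h : T -> nat) (N : nat) (A : T -> L) :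
  (forall m, m \in s -> (h m < N)%N) ->
  \sum_(k < N) \sum_(m <- s | h m == k) A m = \sum_(m <- s) A m.
Proof.
elim: s => [|a s IH] hs; first by rewrite big_nil big1 // => k _; rewrite big_nil.
rewrite big_cons -IH; last by move=> m hm; apply: hs; rewrite in_cons hm orbT.
have ha : (h a < N)%N by apply: hs; rewrite mem_head.
have hif : forall c (x y : L), (if c then x + y else y) = (if c then x else 0) + y.
  by move=> [] x y //; rewrite add0r.
under eq_bigr do rewrite big_cons hif.
by rewrite big_split /= -big_mkcond /= (big_pred1 (Ordinal ha)).
Qed.
Arguments eig {L E}.


Lemma holo_zero (Cf L : fieldType) (iota : {rmorphism Cf -> L}) (E : L -> L)
  (Ea : forall u v, E (u + v) = E u + E v)
  (Em : forall u v, E (u * v) = E u * v + u * E v)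
  (Ec : forall c, E (iota c) = 0)
  (hchar : forall j k : nat, (j%:R : L) = k%:R -> j = k)
  (G : 'I_2 -> L) (hG : forall i, E (G i) = - G i) (r : L) (Er : E r = 2%:R * r)
  (f g : {mpoly Cf[2]}) (w : 'I_2 -> Cf) (hw : forall i, w i = 0) :
  g.@[w] != 0 -> r * mmap iota G g = mmap iota G f -> r = 0.
Proof.
move=> hg0 heq.
pose T (p : {mpoly Cf[2]}) m := iota p@_m * mmap1 G m.
have ET : forall p m, E (T p m) = (- (mdeg m)%:R) * T p m.
  move=> p m; rewrite /T (DcM Em) // /mmap1.
  rewrite (Dprod Em _ _ _ _ (fun i => (m i)%:R * -1)).
    by rewrite mdegE natr_sum -big_distrl /=; ring.
  by move=> i; rewrite (Dexp Em _ (-1)) // hG mulN1r.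
pose N := (msize f + msize g).+2.
pose v k := \sum_(m <- msupp g | mdeg m == k) r * T g m
          - \sum_(m <- msupp f | (mdeg m).+2 == k) T f m.
pose lam (k : nat) : L := 2%:R - k%:R.
have hl : forall k, E (lam k) = 0 by move=> k; rewrite (DB Ea) !(Dnat Ea Em) subrr.
have hv : forall k, E (v k) = lam k * v k.
  move=> k; rewrite /v (DB Ea) !(Dsum Ea) mulrBr !big_distrr /=.
  congr (_ - _); apply: eq_bigr => m /eqP hk.
    by rewrite Em Er ET hk /lam; ring.
  rewrite ET -hk /lam (_ : ((mdeg m).+2%:R : L) = (mdeg m)%:R + 2%:R); last by rewrite -natrD addn2.
  by rewrite opprD addrCA subrr addr0.
have hd : forall j k, (j < N)%N -> (k < N)%N -> lam j = lam k -> j = k.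
  move=> j k _ _ /eqP; rewrite /lam (inj_eq (addrI _)) eqr_opp => /eqP.
  exact: hchar.
have hs : \sum_(k < N) v k = 0.
  rewrite sumrB (regroup _ _ _ _ _ (fun m => r * T g m)); last first.
    move=> m hm.
    have := msize_mdeg_lt hm; rewrite /N; lia.
  rewrite (regroup _ _ _ (fun m => (mdeg m).+2) _ (T f)); last first.
    move=> m hm; have := msize_mdeg_lt hm; rewrite /N; lia.
  rewrite -mulr_sumr; apply/eqP; rewrite subr_eq0; apply/eqP; exact: heq.
have := eig Ea Em _ _ _ hl hv hd hs 0%N (ltn0Sn _).
rewrite /v.
have -> : \sum_(m <- msupp f | (mdeg m).+2 == 0%N) T f m = 0 by rewrite big_pred0.
rewrite subr0.
have -> : \sum_(m <- msupp g | mdeg m == 0%N) r * T g m = r * iota (g.@[w]).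
  rewrite mevalE rmorph_sum mulr_sumr big_mkcond /=; apply: eq_bigr => m _.
  rewrite mdeg_eq0 /T; case hm: (m == 0%MM).
    move/eqP: hm => ->; rewrite mmap11 big1 ?mulr1 // => i _.
    by rewrite mnm0E expr0.
  have [i hi] : exists i, m i != 0%N.
    apply/existsP; apply: contraFT hm => /existsPn h; apply/eqP/mnmP => i.
    by rewrite mnm0E; move: (h i); rewrite negbK => /eqP.
  by rewrite (bigD1 i) //= hw expr0n (negbTE hi) mul0r mulr0 rmorph0 mulr0.
move/eqP; rewrite mulf_eq0 fmorph_eq0 (negbTE hg0) orbF; by move/eqP.
Qed.


Theorem mainTheorem4 (R : realType) (d : nat) (A B : {mpoly (complex R)[2]}) :
  homogeneous_foliation d A B ->
  forall (L : fieldType) (iota : {rmorphism complex R -> L})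
         (Dp Dq : L -> L) (P Q : L) (x : 'I_d -> L) (K : L),
    dual_chart_model iota Dp Dq P Q ->
    legendre_slopes iota A B P Q x ->
    is_web_curvature Dp Dq x K ->
    holomorphic_off_dualO iota P Q K ->
    K = 0.
Proof.
move=> [hA hB _ _] L iota Dp Dq P Q x K
  [[Dpa Dpm] [Dqa Dqm] comm Dc [DpP DqP DpQ DqQ]] hsl [Kf [hKf hK]] hol.
pose E u := Q * Dq u.
have Ea u v : E (u + v) = E u + E v by rewrite /E Dqa mulrDr.
have Em u v : E (u * v) = E u * v + u * E v by rewrite /E Dqm; ring.
have Ec c : E (iota c) = 0 by rewrite /E (Dc c).2 mulr0.
have EP : E P = 0 by rewrite /E DqP mulr0.
have EQ : E Q = Q by rewrite /E DqQ mulr1.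
have hx := @slopes_scale _ _ E iota d A B P Q x Ea Em Ec EP EQ hA hB hsl.
have [_ hinj _] := hsl.
have hQ0 : Q != 0.
  apply/eqP => h; move: DqQ; rewrite h (D0 Dqa) => /eqP; by rewrite eq_sym oner_eq0.
have EK : E K = - K.
  rewrite hK (Dsum Ea) -sumrN; apply: eq_bigr => i _.
  rewrite (Dsum Ea) -sumrN; apply: eq_bigr => j _.
  rewrite (Dsum Ea) -sumrN; apply: eq_bigr => k /andP [hij hjk].
  apply: (@curv3_scale _ Dp Dq Q Dpa Dpm Dqa Dqm comm DpQ DqQ (x i) (x j) (x k)); try exact: hx; last by apply: hKf; rewrite hij hjk.
    by apply/eqP => /hinj /eqP; rewrite -val_eqE /= (ltn_eqF hij).
  by apply/eqP => /hinj /eqP; rewrite -val_eqE /= (ltn_eqF hjk).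
have dQi : Dq Q^-1 = - (Q^-1 * Q^-1).
  have h := Dqm Q Q^-1; rewrite mulfV // (D1 Dqm) DqQ mul1r in h.
  have h2 : Q * Dq Q^-1 = - Q^-1 by apply/eqP; rewrite -addr_eq0 addrC -h.
  by rewrite -[Dq Q^-1]mul1r -(mulVf hQ0) -mulrA h2 mulrN.
have [f [g [hg heq]]] := hol 0 0.
have r0 : K * Q ^+ 3 = 0.
  apply: (@holo_zero _ _ iota E Ea Em Ec _ _ _ _ _ _ _ _ _ hg heq).
  - move=> j k; rewrite -!(rmorph_nat iota) => /fmorph_inj /eqP.
    by rewrite eqr_nat => /eqP.
  - move=> i; case: (i == 0); rewrite /E.
      rewrite Dqm dQi DqP; field; exact: hQ0.
    rewrite (DN Dqa) dQi; field; exact: hQ0.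
  - rewrite Em EK (Dexp Em _ 1) ?mul1r //; ring.
  - by move=> i; case: (i == 0).
by move/eqP: r0; rewrite mulf_eq0 expf_eq0 /= (negbTE hQ0) orbF => /eqP.
Qed.
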